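(* Let $f(z)=z+a_2z^2+a_3z^3+\cdots$ be analytic on $\mathbb{D}$, and set $a_1=1$. Let $c_{j,k}$ ($j,k\ge0$) be its Grunsky coefficients. Then for all $j\ge0$ and $k\ge1$, $$c_{j,k}=\sum_{l=1}^{k-1}\frac{l}{k}a_{k-l}c_{j+1,l}-\sum_{m=1}^{j}a_{m+1}c_{j-m,k}-\frac{a_{j+k+1}}{k}.$$
   Context: $\mathbb{D}=\{z\in\mathbb{C}:|z|<1\}$. The Grunsky coefficients $c_{j,k}$ of $f$ are defined by the expansion $\log\frac{f(z)-f(w)}{z-w}=-\sum_{j,k=0}^\infty c_{j,k}z^jw^k$, valid for $|z|,|w|<\varepsilon$ with $\varepsilon>0$ small enough (the branch of the logarithm taking the value $0$ at $z=w=0$). *)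

(* Defs.v *)
From Stdlib Require Import Reals.
From Coquelicot Require Import Coquelicot.
Open Scope R_scope.

Definition cexp (z : C) : C :=
  (exp (Re z) * cos (Im z), exp (Re z) * sin (Im z)).

Definition taylor_on_disc (a : nat -> C) (f : C -> C) : Prop :=
  forall z : C, Cmod z < 1 -> is_series (fun n => (a n * z ^ n)%C) (f z).

(* c are the Grunsky coefficients of f:
   log((f z - f w)/(z - w)) = - sum_{j,k} c_{j,k} z^j w^k for |z|,|w| < eps,
   with the branch of log vanishing at z = w = 0.  The logarithm is
   expressed through its defining property: the (absolutely convergent)
   double power series S(z,w) = - sum c_{j,k} z^j w^k satisfies
   exp(S) = (f z - f w)/(z - w), and S(0,0) = -c_{0,0} = 0 (branch). *)
Definition grunsky_coeffs (f : C -> C) (c : nat -> nat -> C) : Prop :=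
  c 0%nat 0%nat = RtoC 0 /\
  exists eps : R, 0 < eps /\
    forall z w : C, Cmod z < eps -> Cmod w < eps -> z <> w ->
      (forall j, ex_series (fun k => Cmod (c j k) * Cmod z ^ j * Cmod w ^ k)) /\
      ex_series (fun j => Series (fun k => Cmod (c j k) * Cmod z ^ j * Cmod w ^ k)) /\
      exists (s : nat -> C) (L : C),
        (forall j, is_series (fun k => (c j k * z ^ j * w ^ k)%C) (s j)) /\
        is_series s L /\
        cexp (Copp L) = ((f z - f w) / (z - w))%C.

(* Main.v *)
Require Import Defs.
From Stdlib Require Import Reals.
From Coquelicot Require Import Coquelicot.
From Stdlib Require Import Lra Lia Arith FunctionalExtensionality Classical.
Open Scope R_scope.


Lemma series_eps {K : AbsRing} {V : NormedModule K} (a : nat -> V) l :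
  is_series a l <-> forall eps : R, 0 < eps -> exists N, forall n, (N <= n)%nat ->
     norm (minus (sum_n a n) l) < eps.
Proof.
  unfold is_series. rewrite (filterlim_locally (sum_n a) l). split.
  - intros H eps Heps.
    assert (Hp : 0 < eps / (@norm_factor K V)).
    { apply Rdiv_lt_0_compat; auto. apply norm_factor_gt_0. }
    destruct (H (mkposreal _ Hp)) as [N HN]. exists N. intros n Hn.
    specialize (HN n Hn). apply norm_compat2 in HN. simpl in HN.
    replace eps with ((@norm_factor K V) * (eps / (@norm_factor K V))). exact HN.
    field. apply Rgt_not_eq, norm_factor_gt_0.
  - intros H eps. destruct (H eps (cond_pos eps)) as [N HN]. exists N.
    intros n Hn. apply norm_compat1. auto.
Qed.

Lemma Cseries_eps (a : nat -> C) l :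
  is_series a l <-> forall eps : R, 0 < eps -> exists N, forall n, (N <= n)%nat ->
     Cmod (sum_n a n - l)%C < eps.
Proof. exact (series_eps (K:=C_AbsRing) (V:=C_NormedModule) a l). Qed.

Lemma Cseries_unique (a : nat -> C) l1 l2 : is_series a l1 -> is_series a l2 -> l1 = l2.
Proof. intros H1 H2. exact (filterlim_locally_unique _ _ _ H1 H2). Qed.


Lemma sum_n_Re (a : nat -> C) n : Re (sum_n a n) = sum_n (fun k => Re (a k)) n.
Proof.
  induction n. rewrite !sum_O. reflexivity.
  rewrite !sum_Sn, <- IHn. reflexivity.
Qed.
Lemma sum_n_Im (a : nat -> C) n : Im (sum_n a n) = sum_n (fun k => Im (a k)) n.
Proof.
  induction n. rewrite !sum_O. reflexivity.
  rewrite !sum_Sn, <- IHn. reflexivity.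
Qed.

Lemma im_le_Cmod (c : C) : Rabs (Im c) <= Cmod c.
Proof.
  rewrite <- (Rabs_pos_eq (Cmod c)) by apply Cmod_ge_0.
  apply Rsqr_le_abs_0. unfold Rsqr.
  pose proof (Cmod2_alt c). simpl in H. nra.
Qed.

Lemma Cmod_le_ReIm (c : C) : Cmod c <= Rabs (Re c) + Rabs (Im c).
Proof.
  rewrite <- (Rabs_pos_eq (Cmod c)) by apply Cmod_ge_0.
  rewrite <- (Rabs_pos_eq (Rabs (Re c) + Rabs (Im c))) by (pose proof (Rabs_pos (Re c)); pose proof (Rabs_pos (Im c)); lra).
  apply Rsqr_le_abs_0. unfold Rsqr.
  pose proof (Cmod2_alt c).
  pose proof (Rabs_pos (Re c)); pose proof (Rabs_pos (Im c)).
  assert (E1 : Re c ^ 2 = Rabs (Re c) * Rabs (Re c)) by (rewrite <- Rabs_mult; rewrite Rabs_pos_eq; nra).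
  assert (E2 : Im c ^ 2 = Rabs (Im c) * Rabs (Im c)) by (rewrite <- Rabs_mult; rewrite Rabs_pos_eq; nra).
  rewrite E1, E2 in H. replace (Cmod c * Cmod c) with (Cmod c ^ 2) by ring. rewrite H.
  nra.
Qed.

Lemma Rseries_eps (a : nat -> R) l :
  is_series a l <-> forall eps : R, 0 < eps -> exists N, forall n, (N <= n)%nat ->
     Rabs (sum_n a n - l) < eps.
Proof. exact (series_eps (K:=R_AbsRing) (V:=R_NormedModule) a l). Qed.

Lemma is_series_Re (a : nat -> C) l : is_series a l -> is_series (fun n => Re (a n)) (Re l).
Proof.
  rewrite Cseries_eps, Rseries_eps. intros H eps Heps.
  destruct (H eps Heps) as [N HN]. exists N. intros n Hn.
  rewrite <- sum_n_Re. eapply Rle_lt_trans; [|apply (HN n Hn)].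
  eapply Rle_trans; [|apply re_le_Cmod]. right. reflexivity.
Qed.

Lemma is_series_Im (a : nat -> C) l : is_series a l -> is_series (fun n => Im (a n)) (Im l).
Proof.
  rewrite Cseries_eps, Rseries_eps. intros H eps Heps.
  destruct (H eps Heps) as [N HN]. exists N. intros n Hn.
  rewrite <- sum_n_Im. eapply Rle_lt_trans; [|apply (HN n Hn)].
  eapply Rle_trans; [|apply im_le_Cmod]. right. reflexivity.
Qed.

Lemma is_series_C_of (a : nat -> C) x y :
  is_series (fun n => Re (a n)) x -> is_series (fun n => Im (a n)) y -> is_series a (x, y).
Proof.
  rewrite Cseries_eps, !Rseries_eps. intros H1 H2 eps Heps.
  destruct (H1 (eps/2)) as [N1 HN1]. lra.
  destruct (H2 (eps/2)) as [N2 HN2]. lra.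
  exists (N1 + N2)%nat. intros n Hn.
  eapply Rle_lt_trans. apply Cmod_le_ReIm.
  specialize (HN1 n ltac:(lia)). specialize (HN2 n ltac:(lia)).
  rewrite <- sum_n_Re in HN1. rewrite <- sum_n_Im in HN2.
  replace (Re (sum_n a n - (x, y))%C) with (Re (sum_n a n) - x) by (simpl; ring).
  replace (Im (sum_n a n - (x, y))%C) with (Im (sum_n a n) - y) by (simpl; ring).
  lra.
Qed.

Definition CS (a : nat -> C) : C := (Series (fun n => Re (a n)), Series (fun n => Im (a n))).

Lemma CS_correct (a : nat -> C) l : is_series a l -> CS a = l.
Proof.
  intros H. unfold CS.
  rewrite (is_series_unique _ _ (is_series_Re a l H)).
  rewrite (is_series_unique _ _ (is_series_Im a l H)).
  destruct l; reflexivity.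
Qed.

Lemma CS_ex (a : nat -> C) : ex_series a -> is_series a (CS a).
Proof. intros [l H]. rewrite (CS_correct a l H). exact H. Qed.

Lemma ex_series_Cabs (a : nat -> C) : ex_series (fun n => Cmod (a n)) -> ex_series a.
Proof. intros H. apply (ex_series_le (K:=C_AbsRing) (V:=C_CompleteNormedModule) a (fun n => Cmod (a n))); auto.
  intros; apply Rle_refl. Qed.

Lemma ex_series_Cle (a : nat -> C) (b : nat -> R) : (forall n, Cmod (a n) <= b n) -> ex_series b -> ex_series a.
Proof. intros H1 H2. apply (ex_series_le (K:=C_AbsRing) (V:=C_CompleteNormedModule) a b); auto. Qed.

Lemma Cseries_norm_le (b : nat -> C) l (B : nat -> R) :
  is_series b l -> (forall n, Cmod (b n) <= B n) -> ex_series B -> Cmod l <= Series B.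
Proof.
  intros Hb HB HexB.
  apply le_epsilon. intros eps Heps.
  rewrite Cseries_eps in Hb. destruct (Hb eps Heps) as [N HN].
  specialize (HN N (le_n _)).
  assert (Hs : Cmod (sum_n b N) <= sum_n B N).
  { clear HN. induction N. rewrite !sum_O. apply HB.
    rewrite !sum_Sn. eapply Rle_trans. apply (Cmod_triangle (sum_n b N) (b (S N))).
    simpl. specialize (HB (S N)). change (plus (sum_n B N) (B (S N))) with (sum_n B N + B (S N)). lra. }
  assert (Hp : sum_n B N <= Series B).
  { assert (forall n, 0 <= B n). intros n. eapply Rle_trans. apply Cmod_ge_0. apply HB.
    destruct HexB as [lB HlB]. rewrite (is_series_unique _ _ HlB).
    rewrite sum_n_Reals.
    apply is_series_Reals in HlB. apply (sum_incr B N lB HlB H). }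
  assert (Cmod l <= Cmod (sum_n b N) + Cmod (sum_n b N - l)%C).
  { replace l with (sum_n b N - (sum_n b N - l))%C at 1 by ring.
    eapply Rle_trans. apply Cmod_triangle. rewrite Cmod_opp. lra. }
  lra.
Qed.


Lemma sum_n_R_S (B : nat -> R) N : sum_n B (S N) = sum_n B N + B (S N).
Proof. rewrite sum_Sn. reflexivity. Qed.

Lemma sum_n_nonneg (B : nat -> R) N : (forall k, 0 <= B k) -> 0 <= sum_n B N.
Proof.
  intros HB. induction N. rewrite sum_O. auto.
  rewrite sum_n_R_S. specialize (HB (S N)). lra.
Qed.

Lemma term_le_sum (B : nat -> R) n N : (forall k, 0 <= B k) -> (n <= N)%nat -> B n <= sum_n B N.
Proof.
  intros HB Hn. induction N.
  - assert (n = 0%nat) by lia. subst. rewrite sum_O. lra.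
  - rewrite sum_n_R_S.
    destruct (Nat.eq_dec n (S N)). subst.
    pose proof (sum_n_nonneg B N HB). lra.
    specialize (IHN ltac:(lia)). specialize (HB (S N)). lra.
Qed.

Lemma sum_n_le_Series (B : nat -> R) N : (forall k, 0 <= B k) -> ex_series B -> sum_n B N <= Series B.
Proof.
  intros H [lB HlB]. rewrite (is_series_unique _ _ HlB).
  rewrite sum_n_Reals. apply is_series_Reals in HlB. apply (sum_incr B N lB HlB H).
Qed.

Lemma term_le_Series (B : nat -> R) n : (forall k, 0 <= B k) -> ex_series B -> B n <= Series B.
Proof.
  intros H1 H2. eapply Rle_trans. apply (term_le_sum B n n H1 (le_n _)).
  apply sum_n_le_Series; auto.
Qed.

Lemma Cseries_bounded (b : nat -> C) l : is_series b l -> exists M, forall n, Cmod (b n) <= M.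
Proof.
  intros H. rewrite Cseries_eps in H. destruct (H 1 Rlt_0_1) as [N HN].
  exists (2 + sum_n (fun k => Cmod (b k)) N). intros n.
  assert (Hs : 0 <= sum_n (fun k => Cmod (b k)) N) by (apply sum_n_nonneg; intros; apply Cmod_ge_0).
  destruct (le_lt_dec n N).
  - pose proof (term_le_sum (fun k => Cmod (b k)) n N (fun k => Cmod_ge_0 _) l0). simpl in H0. lra.
  - destruct n. lia.
    pose proof (HN (S n) ltac:(lia)). pose proof (HN n ltac:(lia)).
    rewrite sum_Sn in H0.
    replace (b (S n)) with ((plus (sum_n b n) (b (S n)) - l) - (sum_n b n - l))%C.
    2:{ change (plus (sum_n b n) (b (S n))) with (Cplus (sum_n b n) (b (S n))). ring. }
    eapply Rle_trans. apply Cmod_triangle. rewrite Cmod_opp. lra.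
Qed.

Lemma bounded_abs (a : nat -> C) (r R0 M : R) : 0 <= r < R0 ->
  (forall n, Cmod (a n) * R0 ^ n <= M) -> ex_series (fun n => Cmod (a n) * r ^ n).
Proof.
  intros [Hr HrR] HM.
  assert (HR : 0 < R0) by lra.
  apply (ex_series_le (K:=R_AbsRing) (V:=R_CompleteNormedModule) _ (fun n => M * (r / R0) ^ n)).
  - intros n. change (norm (Cmod (a n) * r ^ n)) with (Rabs (Cmod (a n) * r ^ n)).
    rewrite Rabs_pos_eq by (apply Rmult_le_pos; [apply Cmod_ge_0| apply pow_le; lra]).
    unfold Rdiv. rewrite Rpow_mult_distr, pow_inv.
    specialize (HM n). pose proof (pow_lt R0 n HR). pose proof (pow_le r n Hr).
    pose proof (Cmod_ge_0 (a n)).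
    replace (M * (r ^ n * / R0 ^ n)) with ((M / R0 ^ n) * r ^ n) by (field; lra).
    apply Rmult_le_compat_r. auto.
    apply (Rmult_le_reg_r (R0 ^ n)). auto. unfold Rdiv. rewrite Rmult_assoc, Rinv_l by lra. lra.
  - exists (M * / (1 - r / R0)). apply (is_series_scal_l (K:=R_AbsRing) (V:=R_NormedModule) M).
    apply is_series_geom. rewrite Rabs_pos_eq. apply (Rmult_lt_reg_r R0). auto.
    unfold Rdiv. rewrite Rmult_assoc, Rinv_l by lra. lra.
    apply Rmult_le_pos; auto. left; apply Rinv_0_lt_compat; auto.
Qed.


Lemma Cpow_S (x : C) n : (x ^ S n = x * x ^ n)%C.
Proof. reflexivity. Qed.

Lemma ps_zero_0 (a : nat -> C) (R0 : R) (P : C -> Prop) :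
  0 < R0 -> (exists M, forall n, Cmod (a n) * R0 ^ n <= M) ->
  (forall x, P x -> x <> RtoC 0 -> Cmod x < R0 -> is_series (fun n => (a n * x ^ n)%C) (RtoC 0)) ->
  (forall d, 0 < d -> exists x, P x /\ x <> RtoC 0 /\ Cmod x < d) ->
  a 0%nat = RtoC 0.
Proof.
  intros HR [M HM] Hz Hd.
  set (r := R0 / 2).
  assert (Hr : 0 < r < R0) by (unfold r; lra).
  assert (HMS : forall n, Cmod (a (S n)) * R0 ^ n <= M / R0).
  { intros n. specialize (HM (S n)). simpl in HM.
    apply (Rmult_le_reg_r R0). auto. replace (M / R0 * R0) with M by (field; lra).
    replace (Cmod (a (S n)) * R0 ^ n * R0) with (Cmod (a (S n)) * (R0 * R0 ^ n)) by ring. lra. }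
  pose proof (bounded_abs (fun n => a (S n)) r R0 (M / R0) ltac:(lra) HMS) as Hex.
  set (T := Series (fun n => Cmod (a (S n)) * r ^ n)).
  assert (HT : 0 <= T). { unfold T. eapply Rle_trans; [| apply (term_le_Series _ 0%nat)]; auto.
     apply Rmult_le_pos. apply Cmod_ge_0. apply pow_le; lra.
     intros; apply Rmult_le_pos. apply Cmod_ge_0. apply pow_le; lra. }
  assert (Hb : forall d, 0 < d -> Cmod (a 0%nat) <= d * T).
  { intros d Hd0. destruct (Hd (Rmin d r) ltac:(apply Rmin_pos; lra)) as [x [HPx [Hx0 Hxd]]].
    assert (Hxr : Cmod x < r) by (eapply Rlt_le_trans; [apply Hxd| apply Rmin_r]).
    assert (Hxd' : Cmod x < d) by (eapply Rlt_le_trans; [apply Hxd| apply Rmin_l]).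
    specialize (Hz x HPx Hx0 ltac:(lra)).
    assert (Hs : is_series (fun k => (a (S k) * x ^ S k)%C) (- a 0%nat)%C).
    { apply (is_series_incr_1 (K:=C_AbsRing) (V:=C_NormedModule) (fun k => (a k * x ^ k)%C)).
      match goal with |- is_series _ ?l => replace l with (RtoC 0) end. exact Hz.
      change plus with Cplus. simpl. ring. }
    pose proof (Cseries_norm_le _ _ (fun n => Cmod x * (Cmod (a (S n)) * r ^ n)) Hs) as Hle.
    rewrite Cmod_opp in Hle.
    assert (Hex2 : ex_series (fun n => Cmod x * (Cmod (a (S n)) * r ^ n))).
    { apply (ex_series_scal_l (K:=R_AbsRing) (V:=R_NormedModule) (Cmod x)). exact Hex. }
    specialize (Hle ltac:(intros n; rewrite Cmod_mult, Cpow_S, Cmod_mult, Cmod_pow;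
       pose proof (Cmod_ge_0 x); pose proof (Cmod_ge_0 (a (S n)));
       pose proof (pow_incr (Cmod x) r n ltac:(lra)); pose proof (pow_le (Cmod x) n H);
       replace (Cmod (a (S n)) * (Cmod x * Cmod x ^ n)) with (Cmod x * (Cmod (a (S n)) * Cmod x ^ n)) by ring;
       apply Rmult_le_compat_l; auto; apply Rmult_le_compat_l; auto) Hex2).
    rewrite Series_scal_l in Hle. fold T in Hle.
    eapply Rle_trans. apply Hle. apply Rmult_le_compat_r; auto. lra. }
  assert (Cmod (a 0%nat) <= 0).
  { apply le_epsilon. intros eps Heps. rewrite Rplus_0_l.
    eapply Rle_trans. apply (Hb (eps / (T + 1))). apply Rdiv_lt_0_compat; lra.
    apply (Rmult_le_reg_r (T + 1)). lra. replace (eps / (T + 1) * T * (T + 1)) with (eps * T) by (field; lra).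
    nra. }
  apply Cmod_eq_0. pose proof (Cmod_ge_0 (a 0%nat)). lra.
Qed.

Lemma ps_zero (a : nat -> C) (R0 : R) (P : C -> Prop) :
  0 < R0 -> (exists M, forall n, Cmod (a n) * R0 ^ n <= M) ->
  (forall x, P x -> x <> RtoC 0 -> Cmod x < R0 -> is_series (fun n => (a n * x ^ n)%C) (RtoC 0)) ->
  (forall d, 0 < d -> exists x, P x /\ x <> RtoC 0 /\ Cmod x < d) ->
  forall n, a n = RtoC 0.
Proof.
  intros HR HM Hz Hd n. revert a HM Hz. induction n; intros a HM Hz.
  - eapply ps_zero_0; eauto.
  - pose proof (ps_zero_0 a R0 P HR HM Hz Hd) as Ha0.
    apply (IHn (fun k => a (S k))).
    + destruct HM as [M HM]. exists (M / R0). intros k. specialize (HM (S k)). simpl in HM.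
      apply (Rmult_le_reg_r R0). auto. replace (M / R0 * R0) with M by (field; lra).
      replace (Cmod (a (S k)) * R0 ^ k * R0) with (Cmod (a (S k)) * (R0 * R0 ^ k)) by ring. lra.
    + intros x HPx Hx0 HxR. specialize (Hz x HPx Hx0 HxR).
      assert (Hs : is_series (fun k => (a (S k) * x ^ S k)%C) (RtoC 0)).
      { apply (is_series_incr_1 (K:=C_AbsRing) (V:=C_NormedModule) (fun k => (a k * x ^ k)%C)).
        match goal with |- is_series _ ?l => replace l with (RtoC 0) end. exact Hz.
        rewrite Ha0. change plus with Cplus. simpl. ring. }
      pose proof (is_series_scal_l (K:=C_AbsRing) (V:=C_NormedModule) (/ x)%C _ _ Hs) as Hs2.
      eapply is_series_ext; [|match goal with |- is_series _ ?l => replace l with (scal (/ x)%C (RtoC 0)); [exact Hs2|] end].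
      * intros k. change scal with Cmult. simpl. field. auto.
      * change scal with Cmult. simpl. ring.
Qed.


Lemma Rex_series_le (a b : nat -> R) : (forall n, 0 <= a n <= b n) -> ex_series b -> ex_series a.
Proof.
  intros H1 H2. apply (ex_series_le (K:=R_AbsRing) (V:=R_CompleteNormedModule) a b); auto.
  intros n. change (norm (a n)) with (Rabs (a n)). rewrite Rabs_pos_eq; apply H1.
Qed.

Lemma tannery (u : nat -> nat -> R) (N : nat -> R) :
  (forall j M, 0 <= u j M <= N j) -> ex_series N ->
  (forall j, is_lim_seq (fun M => u j M) 0) ->
  forall eps, 0 < eps -> exists M0, forall M, (M0 <= M)%nat -> Series (fun j => u j M) < eps.
Proof.
  intros Hu HN Hlim eps Heps.
  assert (HN0 : forall j, 0 <= N j) by (intros j; specialize (Hu j 0%nat); lra).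
  pose proof (Series_correct _ HN) as HNs. rewrite Rseries_eps in HNs.
  destruct (HNs (eps/2) ltac:(lra)) as [J HJ]. specialize (HJ J (le_n _)).
  assert (Hfin : is_lim_seq (fun M => sum_n (fun j => u j M) J) 0).
  { clear HJ. induction J. eapply is_lim_seq_ext; [|apply (Hlim 0%nat)]. intros; rewrite sum_O; auto.
    pose proof (is_lim_seq_plus' _ _ 0 0 IHJ (Hlim (S J))) as H0. rewrite Rplus_0_r in H0.
    eapply is_lim_seq_ext; [| apply H0].
    intros M. rewrite sum_n_R_S. reflexivity. }
  apply is_lim_seq_spec in Hfin. destruct (Hfin (mkposreal (eps/2) ltac:(lra))) as [M0 HM0].
  exists M0. intros M HM. specialize (HM0 M HM). simpl in HM0.
  assert (Hex : ex_series (fun j => u j M)) by (apply (Rex_series_le _ N); auto).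
  rewrite (Series_incr_n _ (S J)) by (auto; lia). simpl Init.Nat.pred.
  rewrite <- sum_n_Reals.
  assert (HNt : ex_series (fun k => N (S J + k)%nat)) by (apply ex_series_incr_n; auto).
  assert (Hle : Series (fun k => u (S J + k)%nat M) <= Series (fun k => N (S J + k)%nat)).
  { apply Series_le; auto. }
  rewrite (Series_incr_n N (S J)) in HJ by (auto; lia). simpl Init.Nat.pred in HJ.
  rewrite <- sum_n_Reals in HJ.
  rewrite Rminus_0_r in HM0.
  assert (0 <= sum_n (fun j => u j M) J) by (apply sum_n_nonneg; intros; apply Hu).
  rewrite Rabs_pos_eq in HM0 by auto.
  assert (0 <= Series (fun k => N (S J + k)%nat)).
  { eapply Rle_trans; [| apply (sum_n_le_Series _ 0%nat)]; auto.
    apply sum_n_nonneg; auto. }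
  rewrite Rabs_minus_sym, Rabs_pos_eq in HJ by lra. lra.
Qed.

Lemma sum_n_C_S (b : nat -> C) N : sum_n b (S N) = (sum_n b N + b (S N))%C.
Proof. rewrite sum_Sn. reflexivity. Qed.

Lemma tail_bound (b : nat -> C) l M :
  is_series b l -> ex_series (fun n => Cmod (b n)) ->
  Cmod (l - sum_n b M)%C <= Series (fun n => Cmod (b n)) - sum_n (fun n => Cmod (b n)) M.
Proof.
  intros Hb Hab.
  assert (Hk : forall k, Cmod (sum_n b (M + k) - sum_n b M)%C <=
              sum_n (fun n => Cmod (b n)) (M + k) - sum_n (fun n => Cmod (b n)) M).
  { induction k. rewrite Nat.add_0_r. replace (sum_n b M - sum_n b M)%C with (RtoC 0) by ring.
    rewrite Cmod_0. lra.
    rewrite Nat.add_succ_r, sum_n_C_S, sum_n_R_S.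
    replace (sum_n b (M + k) + b (S (M + k)) - sum_n b M)%C with
      ((sum_n b (M + k) - sum_n b M) + b (S (M + k)))%C by ring.
    eapply Rle_trans. apply Cmod_triangle. lra. }
  apply le_epsilon. intros eps Heps.
  rewrite Cseries_eps in Hb. destruct (Hb eps Heps) as [N HN].
  specialize (HN (M + N)%nat ltac:(lia)). specialize (Hk N).
  pose proof (sum_n_le_Series (fun n => Cmod (b n)) (M + N) (fun n => Cmod_ge_0 _) Hab).
  replace (l - sum_n b M)%C with ((sum_n b (M + N) - sum_n b M) - (sum_n b (M + N) - l))%C by ring.
  eapply Rle_trans. apply Cmod_triangle. rewrite Cmod_opp. lra.
Qed.

Lemma is_series_sum_n (A : nat -> nat -> C) (t : nat -> C) M :
  (forall k, is_series (fun j => A j k) (t k)) ->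
  is_series (fun j => sum_n (fun k => A j k) M) (sum_n t M).
Proof.
  intros H. induction M.
  - rewrite sum_O. eapply is_series_ext; [|apply (H 0%nat)]. intros; rewrite sum_O; auto.
  - rewrite sum_Sn. eapply is_series_ext; [|apply (is_series_plus _ _ _ _ IHM (H (S M)))].
    intros j. rewrite sum_Sn. reflexivity.
Qed.

Lemma fubini (A : nat -> nat -> C) (s : nat -> C) (L : C) :
  (forall j, ex_series (fun k => Cmod (A j k))) ->
  ex_series (fun j => Series (fun k => Cmod (A j k))) ->
  (forall j, is_series (fun k => A j k) (s j)) -> is_series s L ->
  (forall k, ex_series (fun j => A j k)) /\ is_series (fun k => CS (fun j => A j k)) L.
Proof.
  intros Hrow HN Hs HL.
  set (N := fun j => Series (fun k => Cmod (A j k))).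
  assert (HAN : forall j k, Cmod (A j k) <= N j).
  { intros j k. apply (term_le_Series (fun k => Cmod (A j k))); auto. intros; apply Cmod_ge_0. }
  assert (Hcol : forall k, ex_series (fun j => A j k)).
  { intros k. apply (ex_series_Cle _ N); auto. }
  split; auto.
  set (t := fun k => CS (fun j => A j k)).
  assert (Ht : forall k, is_series (fun j => A j k) (t k)) by (intros k; apply CS_ex; auto).
  set (u := fun j M => N j - sum_n (fun k => Cmod (A j k)) M).
  assert (Hu : forall j M, 0 <= u j M <= N j).
  { intros j M. unfold u. split.
    pose proof (sum_n_le_Series (fun k => Cmod (A j k)) M (fun k => Cmod_ge_0 _) (Hrow j)). unfold N. lra.
    pose proof (sum_n_nonneg (fun k => Cmod (A j k)) M (fun k => Cmod_ge_0 _)). lra. }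
  assert (Hlim : forall j, is_lim_seq (fun M => u j M) 0).
  { intros j. unfold u.
    pose proof (Series_correct _ (Hrow j)) as H1.
    apply is_lim_seq_spec. intros eps. rewrite Rseries_eps in H1.
    destruct (H1 eps (cond_pos eps)) as [M0 HM0]. exists M0. intros M HM.
    specialize (HM0 M HM). rewrite Rminus_0_r, Rabs_minus_sym. exact HM0. }
  pose proof (tannery u N Hu HN Hlim) as HT.
  rewrite Cseries_eps. intros eps Heps.
  destruct (HT eps Heps) as [M0 HM0]. exists M0. intros M HM. specialize (HM0 M HM).
  pose proof (is_series_sum_n A t M Ht) as HsM.
  pose proof (is_series_minus _ _ _ _ HL HsM) as Hd.
  assert (Hexu : ex_series (fun j => u j M)) by (apply (Rex_series_le _ N); auto).
  pose proof (Cseries_norm_le _ _ (fun j => u j M) Hd) as Hb.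
  rewrite <- Cmod_opp.
  assert (E : (- (sum_n t M - L))%C = minus L (sum_n t M)).
  { change (minus L (sum_n t M)) with (L - sum_n t M)%C. ring. }
  rewrite E.
  eapply Rle_lt_trans; [apply Hb|]; auto.
  intros j. change (plus (s j) (opp (sum_n (fun k : nat => A j k) M))) with (s j - sum_n (fun k => A j k) M)%C.
  apply tail_bound; auto.
Qed.


Lemma ex_Re_abs (a : nat -> C) : ex_series (fun n => Cmod (a n)) -> ex_series (fun n => Rabs (Re (a n))).
Proof. intros H. apply (Rex_series_le _ _ (fun n => conj (Rabs_pos _) (re_le_Cmod (a n))) H). Qed.
Lemma ex_Im_abs (a : nat -> C) : ex_series (fun n => Cmod (a n)) -> ex_series (fun n => Rabs (Im (a n))).
Proof. intros H. apply (Rex_series_le _ _ (fun n => conj (Rabs_pos _) (im_le_Cmod (a n))) H). Qed.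

Lemma is_series_Rminus (a b : nat -> R) la lb : is_series a la -> is_series b lb -> is_series (fun n => a n - b n) (la - lb).
Proof. intros H1 H2. exact (is_series_minus (K:=R_AbsRing) (V:=R_NormedModule) _ _ _ _ H1 H2). Qed.
Lemma is_series_Rplus (a b : nat -> R) la lb : is_series a la -> is_series b lb -> is_series (fun n => a n + b n) (la + lb).
Proof. intros H1 H2. exact (is_series_plus (K:=R_AbsRing) (V:=R_NormedModule) _ _ _ _ H1 H2). Qed.

Lemma sum_f_R0_minus (f g : nat -> R) n : sum_f_R0 (fun k => f k - g k) n = sum_f_R0 f n - sum_f_R0 g n.
Proof. induction n; simpl; try rewrite IHn; ring. Qed.
Lemma sum_f_R0_plus (f g : nat -> R) n : sum_f_R0 (fun k => f k + g k) n = sum_f_R0 f n + sum_f_R0 g n.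
Proof. induction n; simpl; try rewrite IHn; ring. Qed.

Lemma cauchy_C (a b : nat -> C) la lb :
  is_series a la -> is_series b lb ->
  ex_series (fun n => Cmod (a n)) -> ex_series (fun n => Cmod (b n)) ->
  is_series (fun n => sum_n (fun k => (a k * b (n - k)%nat)%C) n) (la * lb)%C.
Proof.
  intros Ha Hb Haa Hba.
  pose proof (is_series_Re _ _ Ha) as Ra. pose proof (is_series_Im _ _ Ha) as Ia.
  pose proof (is_series_Re _ _ Hb) as Rb. pose proof (is_series_Im _ _ Hb) as Ib.
  pose proof (ex_Re_abs _ Haa) as Raa. pose proof (ex_Im_abs _ Haa) as Iaa.
  pose proof (ex_Re_abs _ Hba) as Rba. pose proof (ex_Im_abs _ Hba) as Iba.
  replace (la * lb)%C with (Re la * Re lb - Im la * Im lb, Re la * Im lb + Im la * Re lb).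
  2:{ destruct la, lb. unfold Cmult. simpl. reflexivity. }
  apply is_series_C_of.
  - eapply is_series_ext; [| apply (is_series_Rminus _ _ _ _ (is_series_mult _ _ _ _ Ra Rb Raa Rba) (is_series_mult _ _ _ _ Ia Ib Iaa Iba))].
    intros n. cbv beta. rewrite <- sum_f_R0_minus, sum_n_Re, sum_n_Reals.
    apply sum_eq. intros k _. simpl. unfold Re, Im. ring.
  - eapply is_series_ext; [| apply (is_series_Rplus _ _ _ _ (is_series_mult _ _ _ _ Ra Ib Raa Iba) (is_series_mult _ _ _ _ Ia Rb Iaa Rba))].
    intros n. cbv beta. rewrite <- sum_f_R0_plus, sum_n_Im, sum_n_Reals.
    apply sum_eq. intros k _. simpl. unfold Re, Im. ring.
Qed.

Lemma cauchy_abs (a b : nat -> C) :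
  ex_series (fun n => Cmod (a n)) -> ex_series (fun n => Cmod (b n)) ->
  ex_series (fun n => Cmod (sum_n (fun k => (a k * b (n - k)%nat)%C) n)).
Proof.
  intros Ha Hb.
  apply (Rex_series_le _ (fun n => sum_f_R0 (fun k => Cmod (a k) * Cmod (b (n - k)%nat)) n)).
  - intros n. split. apply Cmod_ge_0.
    rewrite <- sum_n_Reals. clear. generalize n at 1 3. induction n; intros m.
    rewrite !sum_O, Cmod_mult. lra.
    rewrite sum_n_C_S, sum_n_R_S. eapply Rle_trans. apply Cmod_triangle. rewrite Cmod_mult.
    specialize (IHn m). lra.
  - destruct Ha as [la Ha]. destruct Hb as [lb Hb]. exists (la * lb).
    apply (is_series_mult_pos (fun n => Cmod (a n)) (fun n => Cmod (b n))); auto; intros; apply Cmod_ge_0.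
Qed.


Lemma Cmod_term (a : C) (x : C) n : Cmod (a * x ^ n)%C = Cmod a * Cmod x ^ n.
Proof. rewrite Cmod_mult, Cmod_pow. reflexivity. Qed.

Lemma Cmod_RtoC_pos (r : R) : 0 <= r -> Cmod (RtoC r) = r.
Proof. intros. rewrite Cmod_R, Rabs_pos_eq; auto. Qed.

Lemma a_abs (a : nat -> C) (f : C -> C) (hf : taylor_on_disc a f) r :
  0 <= r < 1 -> ex_series (fun n => Cmod (a n) * r ^ n).
Proof.
  intros Hr. set (R1 := (r + 1) / 2).
  assert (HR1 : Cmod (RtoC R1) < 1) by (rewrite Cmod_RtoC_pos; unfold R1; lra).
  destruct (Cseries_bounded _ _ (hf _ HR1)) as [M HM].
  apply (bounded_abs a r R1 M). unfold R1; lra.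
  intros n. specialize (HM n). rewrite Cmod_term, Cmod_RtoC_pos in HM by (unfold R1; lra). auto.
Qed.

Lemma radius_ge (al : nat -> R) (rho : R) :
  (forall r, 0 <= r < rho -> ex_series (fun n => Rabs (al n) * r ^ n)) ->
  forall x, Rabs x < rho -> Rbar_lt (Rabs x) (CV_radius al).
Proof.
  intros H x Hx. set (r := (Rabs x + rho) / 2).
  pose proof (Rabs_pos x).
  assert (Hr : 0 <= r < rho) by (unfold r; lra).
  destruct (CV_radius_bounded al) as [Hub _].
  assert (Hle : Rbar_le r (CV_radius al)).
  { apply Hub. exists (Series (fun n => Rabs (al n) * r ^ n)). intros n.
    rewrite Rabs_mult, (Rabs_pos_eq (r ^ n)) by (apply pow_le; lra).
    apply (term_le_Series (fun n => Rabs (al n) * r ^ n)); auto.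
    intros; apply Rmult_le_pos; [apply Rabs_pos | apply pow_le; lra]. }
  eapply Rbar_lt_le_trans; [| exact Hle]. simpl. unfold r; lra.
Qed.

Lemma radius_Re (b : nat -> C) (rho : R) :
  (forall r, 0 <= r < rho -> ex_series (fun n => Cmod (b n) * r ^ n)) ->
  forall x, Rabs x < rho -> Rbar_lt (Rabs x) (CV_radius (fun n => Re (b n))).
Proof.
  intros H. apply radius_ge. intros r Hr. apply (Rex_series_le _ (fun n => Cmod (b n) * r ^ n)); [|apply (H r Hr)].
  intros n. split. apply Rmult_le_pos; [apply Rabs_pos | apply pow_le; lra].
  apply Rmult_le_compat_r. apply pow_le; lra. apply re_le_Cmod.
Qed.

Lemma radius_Im (b : nat -> C) (rho : R) :
  (forall r, 0 <= r < rho -> ex_series (fun n => Cmod (b n) * r ^ n)) ->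
  forall x, Rabs x < rho -> Rbar_lt (Rabs x) (CV_radius (fun n => Im (b n))).
Proof.
  intros H. apply radius_ge. intros r Hr. apply (Rex_series_le _ (fun n => Cmod (b n) * r ^ n)); [|apply (H r Hr)].
  intros n. split. apply Rmult_le_pos; [apply Rabs_pos | apply pow_le; lra].
  apply Rmult_le_compat_r. apply pow_le; lra. apply im_le_Cmod.
Qed.

Lemma RtoC_pow' (t : R) n : (RtoC t ^ n)%C = RtoC (t ^ n).
Proof. rewrite RtoC_pow. reflexivity. Qed.

Lemma is_pseries_R (al : nat -> R) t l : is_pseries al t l -> is_series (fun n => al n * t ^ n) l.
Proof.
  intros H. eapply is_series_ext; [|exact H]. intros n. simpl. rewrite pow_n_pow.
  change (scal (t ^ n) (al n)) with (t ^ n * al n). ring.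
Qed.

Lemma pseries_C (b : nat -> C) (t : R) :
  Rbar_lt (Rabs t) (CV_radius (fun n => Re (b n))) ->
  Rbar_lt (Rabs t) (CV_radius (fun n => Im (b n))) ->
  is_series (fun n => (b n * RtoC t ^ n)%C)
    (PSeries (fun n => Re (b n)) t, PSeries (fun n => Im (b n)) t).
Proof.
  intros H1 H2. apply is_series_C_of.
  - eapply is_series_ext; [| apply is_pseries_R, PSeries_correct, CV_radius_inside, H1].
    intros n. cbv beta. rewrite RtoC_pow', re_scal_r. reflexivity.
  - eapply is_series_ext; [| apply is_pseries_R, PSeries_correct, CV_radius_inside, H2].
    intros n. cbv beta. rewrite RtoC_pow', im_scal_r. reflexivity.
Qed.

Lemma pseries_C_derive (b : nat -> C) (t : R) :
  Rbar_lt (Rabs t) (CV_radius (fun n => Re (b n))) ->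
  Rbar_lt (Rabs t) (CV_radius (fun n => Im (b n))) ->
  is_series (fun n => (RtoC (INR (S n)) * b (S n) * RtoC t ^ n)%C)
    (Derive (PSeries (fun n => Re (b n))) t, Derive (PSeries (fun n => Im (b n))) t).
Proof.
  intros H1 H2. apply is_series_C_of.
  - eapply is_series_ext; [| apply is_pseries_R, is_pseries_derive, H1].
    intros n. cbv beta. rewrite RtoC_pow', re_scal_r, re_scal_l. unfold PS_derive. reflexivity.
  - eapply is_series_ext; [| apply is_pseries_R, is_pseries_derive, H2].
    intros n. cbv beta. rewrite RtoC_pow', im_scal_r, im_scal_l. unfold PS_derive. reflexivity.
Qed.

Lemma pseries_C_abs (b : nat -> C) (t : R) :
  Rbar_lt (Rabs t) (CV_radius (fun n => Re (b n))) ->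
  Rbar_lt (Rabs t) (CV_radius (fun n => Im (b n))) ->
  ex_series (fun n => Cmod (b n * RtoC t ^ n)%C).
Proof.
  intros H1 H2. pose proof (CV_disk_inside _ _ H1) as D1. pose proof (CV_disk_inside _ _ H2) as D2.
  apply (Rex_series_le _ (fun n => Rabs (Re (b n) * t ^ n) + Rabs (Im (b n) * t ^ n))).
  - intros n. split. apply Cmod_ge_0. eapply Rle_trans. apply Cmod_le_ReIm.
    rewrite RtoC_pow', re_scal_r, im_scal_r. lra.
  - destruct D1 as [l1 D1], D2 as [l2 D2]. exists (l1 + l2). apply is_series_Rplus; auto.
Qed.

Lemma pseries_C_derive_abs (b : nat -> C) (t : R) :
  Rbar_lt (Rabs t) (CV_radius (fun n => Re (b n))) ->
  Rbar_lt (Rabs t) (CV_radius (fun n => Im (b n))) ->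
  ex_series (fun n => Cmod (RtoC (INR (S n)) * b (S n) * RtoC t ^ n)%C).
Proof.
  intros H1 H2.
  rewrite <- CV_radius_derive in H1, H2.
  pose proof (pseries_C_abs (fun n => RtoC (INR (S n)) * b (S n))%C t) as H.
  apply H.
  - replace (fun n => Re (RtoC (INR (S n)) * b (S n))%C) with (PS_derive (fun n => Re (b n))). exact H1.
    apply functional_extensionality.
    intros n. unfold PS_derive. rewrite re_scal_l. reflexivity.
  - replace (fun n => Im (RtoC (INR (S n)) * b (S n))%C) with (PS_derive (fun n => Im (b n))). exact H2.
    apply functional_extensionality.
    intros n. unfold PS_derive. rewrite im_scal_l. reflexivity.
Qed.


Definition GR (f : C -> C) (c : nat -> nat -> C) (z w : C) : Prop :=
      (forall j, ex_series (fun k => Cmod (c j k) * Cmod z ^ j * Cmod w ^ k)) /\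
      ex_series (fun j => Series (fun k => Cmod (c j k) * Cmod z ^ j * Cmod w ^ k)) /\
      exists (s : nat -> C) (L : C),
        (forall j, is_series (fun k => (c j k * z ^ j * w ^ k)%C) (s j)) /\
        is_series s L /\
        cexp (Copp L) = ((f z - f w) / (z - w))%C.

Definition bb (c : nat -> nat -> C) (z : C) (k : nat) : C := CS (fun j => (c j k * z ^ j)%C).

Lemma GR_N_bound f c z w j k : GR f c z w ->
  Cmod (c j k) * Cmod z ^ j * Cmod w ^ k <= Series (fun k => Cmod (c j k) * Cmod z ^ j * Cmod w ^ k).
Proof.
  intros [H1 _]. apply (term_le_Series (fun k => Cmod (c j k) * Cmod z ^ j * Cmod w ^ k)); auto.
  intros. repeat apply Rmult_le_pos; try apply pow_le; apply Cmod_ge_0.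
Qed.

Lemma col_abs f c z w : GR f c z w -> w <> RtoC 0 ->
  forall k, ex_series (fun j => Cmod (c j k) * Cmod z ^ j).
Proof.
  intros H Hw k. pose proof H as [H1 [H2 _]].
  assert (Hw0 : 0 < Cmod w ^ k) by (apply pow_lt; apply Cmod_gt_0; auto).
  apply (Rex_series_le _ (fun j => Series (fun k => Cmod (c j k) * Cmod z ^ j * Cmod w ^ k) * / Cmod w ^ k)).
  - intros j. split. apply Rmult_le_pos; [apply Cmod_ge_0| apply pow_le, Cmod_ge_0].
    pose proof (GR_N_bound f c z w j k H).
    apply (Rmult_le_reg_r (Cmod w ^ k)); auto.
    match goal with |- _ <= ?S * / ?W * ?W => replace (S * / W * W) with S by (field; lra) end. lra.
  - apply ex_series_scal_r. auto.
Qed.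

Lemma bb_correct f c z w : GR f c z w -> w <> RtoC 0 ->
  forall k, is_series (fun j => (c j k * z ^ j)%C) (bb c z k).
Proof.
  intros H Hw k. apply CS_ex. apply ex_series_Cabs.
  eapply ex_series_ext; [| apply (col_abs f c z w H Hw k)].
  intros j. simpl. rewrite Cmod_term. reflexivity.
Qed.

Lemma exists_w (z : C) (eps : R) : 0 < eps ->
  exists w, w <> z /\ w <> RtoC 0 /\ Cmod w < eps.
Proof.
  intros He. destruct (classic (z = RtoC (eps / 2))) as [Hz | Hz].
  - exists (0, eps / 2). repeat split.
    + intros E. subst. injection E. lra.
    + intros E. injection E. lra.
    + unfold Cmod. simpl. replace (0 * (0 * 1) + eps / 2 * (eps / 2 * 1)) with ((eps / 2) ^ 2) by ring.
      rewrite sqrt_pow2 by lra. lra.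
  - exists (RtoC (eps / 2)). repeat split; auto.
    + intros E. injection E. lra.
    + rewrite Cmod_RtoC_pos; lra.
Qed.

Definition HGR (f : C -> C) (c : nat -> nat -> C) (eps : R) : Prop :=
  forall z w : C, Cmod z < eps -> Cmod w < eps -> z <> w -> GR f c z w.

Lemma bb_ok f c eps z : 0 < eps -> HGR f c eps -> Cmod z < eps ->
  forall k, is_series (fun j => (c j k * z ^ j)%C) (bb c z k).
Proof.
  intros He H Hz. destruct (exists_w z eps He) as [w [Hwz [Hw0 Hw]]].
  apply (bb_correct f c z w); auto.
Qed.

Lemma col_abs' f c eps z : 0 < eps -> HGR f c eps -> Cmod z < eps ->
  forall k, ex_series (fun j => Cmod (c j k) * Cmod z ^ j).
Proof.
  intros He H Hz. destruct (exists_w z eps He) as [w [Hwz [Hw0 Hw]]].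
  apply (col_abs f c z w); auto.
Qed.

Lemma is_series_Cscal_r (a : nat -> C) l (x : C) : is_series a l -> is_series (fun n => (a n * x)%C) (l * x)%C.
Proof.
  intros H. pose proof (is_series_scal_l (K:=C_AbsRing) (V:=C_NormedModule) x _ _ H) as H1.
  replace (l * x)%C with (scal x l) by (change scal with Cmult; simpl; ring).
  eapply is_series_ext; [| exact H1]. intros n. change scal with Cmult. simpl. ring.
Qed.

Lemma RtoC_neq_nonreal (z : C) (t : R) : Im z <> 0 -> z <> RtoC t.
Proof. intros H E. subst. simpl in H. lra. Qed.

Lemma bb_abs f c eps z : 0 < eps -> HGR f c eps -> Im z <> 0 -> Cmod z < eps ->
  forall r, 0 <= r < eps -> ex_series (fun k => Cmod (bb c z k) * r ^ k).
Proof.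
  intros He H Hi Hz r Hr. set (r1 := (r + eps) / 2).
  assert (Hr1 : 0 < r1 < eps) by (unfold r1; lra).
  assert (HG : GR f c z (RtoC r1)).
  { apply H; auto. rewrite Cmod_RtoC_pos; lra. apply RtoC_neq_nonreal; auto. }
  apply (bounded_abs _ r r1 (Series (fun j => Series (fun k => Cmod (c j k) * Cmod z ^ j * Cmod (RtoC r1) ^ k)))).
  unfold r1; lra.
  intros k.
  pose proof (is_series_Cscal_r _ _ (RtoC r1 ^ k)%C (bb_ok f c eps z He H Hz k)) as Hs.
  pose proof HG as [_ [HN _]].
  assert (Hb0 : forall j, Cmod ((c j k * z ^ j) * RtoC r1 ^ k)%C <= Series (fun k => Cmod (c j k) * Cmod z ^ j * Cmod (RtoC r1) ^ k)).
  { intros j. rewrite !Cmod_mult, !Cmod_pow. apply (GR_N_bound f c z (RtoC r1) j k HG). }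
  pose proof (Cseries_norm_le _ _ _ Hs Hb0 HN) as Hb.
  rewrite Cmod_mult, Cmod_pow, Cmod_RtoC_pos in Hb by lra.
  rewrite Cmod_RtoC_pos by lra. exact Hb.
Qed.

Lemma L_series f c eps z (t : R) : 0 < eps -> HGR f c eps -> Im z <> 0 -> Cmod z < eps -> Rabs t < eps ->
  exists L, is_series (fun k => (bb c z k * RtoC t ^ k)%C) L /\
    cexp (Copp L) = ((f z - f (RtoC t)) / (z - RtoC t))%C.
Proof.
  intros He H Hi Hz Ht.
  assert (HG : GR f c z (RtoC t)).
  { apply H; auto. rewrite Cmod_R; auto. apply RtoC_neq_nonreal; auto. }
  destruct HG as [H1 [H2 [s [L [Hs [HL HE]]]]]].
  exists L. split; auto.
  destruct (fubini (fun j k => (c j k * z ^ j * RtoC t ^ k)%C) s L) as [_ HF]; auto.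
  - intros j. eapply ex_series_ext; [|apply (H1 j)]. intros k. simpl. rewrite !Cmod_mult, !Cmod_pow. reflexivity.
  - eapply ex_series_ext; [|apply H2]. intros j. simpl. apply Series_ext. intros k.
    rewrite !Cmod_mult, !Cmod_pow. reflexivity.
  - eapply is_series_ext; [|apply HF]. intros k. simpl.
    apply CS_correct. apply is_series_Cscal_r. apply (bb_ok f c eps z He H Hz k).
Qed.

Definition uu (c : nat -> nat -> C) (z : C) (t : R) : R := PSeries (fun n => Re (bb c z n)) t.
Definition vv (c : nat -> nat -> C) (z : C) (t : R) : R := PSeries (fun n => Im (bb c z n)) t.

Lemma rad_bb_Re f c eps z : 0 < eps -> HGR f c eps -> Im z <> 0 -> Cmod z < eps ->
  forall t, Rabs t < eps -> Rbar_lt (Rabs t) (CV_radius (fun n => Re (bb c z n))).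
Proof. intros. apply (radius_Re _ eps); auto. apply (bb_abs f c eps z); auto. Qed.
Lemma rad_bb_Im f c eps z : 0 < eps -> HGR f c eps -> Im z <> 0 -> Cmod z < eps ->
  forall t, Rabs t < eps -> Rbar_lt (Rabs t) (CV_radius (fun n => Im (bb c z n))).
Proof. intros. apply (radius_Im _ eps); auto. apply (bb_abs f c eps z); auto. Qed.

Lemma key_eq f c eps z (t : R) : 0 < eps -> HGR f c eps -> Im z <> 0 -> Cmod z < eps -> Rabs t < eps ->
  (f z - f (RtoC t))%C = ((z - RtoC t) * cexp (Copp (uu c z t, vv c z t)))%C.
Proof.
  intros He H Hi Hz Ht.
  destruct (L_series f c eps z t He H Hi Hz Ht) as [L [HL HE]].
  pose proof (pseries_C (bb c z) t (rad_bb_Re f c eps z He H Hi Hz t Ht) (rad_bb_Im f c eps z He H Hi Hz t Ht)) as HP.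
  pose proof (Cseries_unique _ _ _ HL HP) as E. unfold uu, vv. rewrite <- E, HE.
  field. intros E2. apply (RtoC_neq_nonreal z t Hi). apply (f_equal (fun x => x + RtoC t)%C) in E2.
  ring_simplify in E2. auto.
Qed.

Lemma rad_a_Re a f (hf : taylor_on_disc a f) : forall t, Rabs t < 1 -> Rbar_lt (Rabs t) (CV_radius (fun n => Re (a n))).
Proof. apply (radius_Re _ 1). intros r Hr. apply (a_abs a f hf r Hr). Qed.
Lemma rad_a_Im a f (hf : taylor_on_disc a f) : forall t, Rabs t < 1 -> Rbar_lt (Rabs t) (CV_radius (fun n => Im (a n))).
Proof. apply (radius_Im _ 1). intros r Hr. apply (a_abs a f hf r Hr). Qed.

Lemma f_real a f (hf : taylor_on_disc a f) (t : R) : Rabs t < 1 ->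
  f (RtoC t) = (PSeries (fun n => Re (a n)) t, PSeries (fun n => Im (a n)) t).
Proof.
  intros Ht. apply (Cseries_unique (fun n => (a n * RtoC t ^ n)%C)).
  apply hf. rewrite Cmod_R; auto.
  apply pseries_C; [apply (rad_a_Re a f hf) | apply (rad_a_Im a f hf)]; auto.
Qed.


Lemma locally_lt (t0 rho : R) : Rabs t0 < rho -> locally t0 (fun t => Rabs t < rho).
Proof.
  intros H. assert (Hd : 0 < rho - Rabs t0) by lra.
  exists (mkposreal _ Hd). intros t Ht. simpl in Ht. unfold ball in Ht. simpl in Ht.
  unfold AbsRing_ball in Ht. change (abs (minus t t0)) with (Rabs (t - t0)) in Ht.
  pose proof (Rabs_triang_inv t t0). lra.
Qed.

Lemma deriv_eq (G H : R -> R) (t0 dG dH : R) :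
  locally t0 (fun t => G t = H t) -> is_derive G t0 dG -> is_derive H t0 dH -> dG = dH.
Proof.
  intros Hl HG HH. apply is_derive_ext_loc with (g := H) in HG; auto.
  rewrite <- (is_derive_unique _ _ _ HG). rewrite <- (is_derive_unique _ _ _ HH). reflexivity.
Qed.

Lemma deriv_identity a f c eps z (t0 : R) : 0 < eps -> HGR f c eps -> taylor_on_disc a f ->
  Im z <> 0 -> Cmod z < eps -> Rabs t0 < Rmin eps 1 ->
  ((f z - f (RtoC t0)) * (Derive (uu c z) t0, Derive (vv c z) t0))%C =
  ((Derive (PSeries (fun n => Re (a n))) t0, Derive (PSeries (fun n => Im (a n))) t0)
    - (f z - f (RtoC t0)) / (z - RtoC t0))%C.
Proof.
  intros He H hf Hi Hz Ht0.
  assert (Hrho1 : Rmin eps 1 <= eps) by apply Rmin_l.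
  assert (Hrho2 : Rmin eps 1 <= 1) by apply Rmin_r.
  set (p := PSeries (fun n => Re (a n))). set (q := PSeries (fun n => Im (a n))).
  set (U := uu c z). set (V := vv c z).
  assert (Hloc : locally t0 (fun t => f z - f (RtoC t) = (z - RtoC t) * cexp (Copp (U t, V t)) /\ f (RtoC t) = (p t, q t))%C).
  { eapply filter_imp; [| apply (locally_lt t0 (Rmin eps 1) Ht0)]. intros t Ht. split.
    apply (key_eq f c eps z t); auto; lra. apply f_real; auto; lra. }
  destruct z as [x y]. simpl in Hi.
  set (FZ := f (x, y)).
  assert (DU : ex_derive U t0) by (apply ex_derive_PSeries; apply (rad_bb_Re f c eps (x, y)); auto; lra).
  assert (DV : ex_derive V t0) by (apply ex_derive_PSeries; apply (rad_bb_Im f c eps (x, y)); auto; lra).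
  assert (DP : ex_derive p t0) by (apply ex_derive_PSeries; apply (rad_a_Re a f hf); lra).
  assert (DQ : ex_derive q t0) by (apply ex_derive_PSeries; apply (rad_a_Im a f hf); lra).
  assert (E1 : - Derive p t0 = - (exp (- U t0) * cos (- V t0)) + (x - t0) * (exp (- U t0) * - Derive U t0 * cos (- V t0) + exp (- U t0) * - sin (- V t0) * - Derive V t0)
    - y * (exp (- U t0) * - Derive U t0 * sin (- V t0) + exp (- U t0) * cos (- V t0) * - Derive V t0)).
  { apply (deriv_eq (fun t => Re FZ - p t) (fun t => (x - t) * (exp (- U t) * cos (- V t)) - y * (exp (- U t) * sin (- V t))) t0).
    - eapply filter_imp; [| apply Hloc]. intros t [Ha Hb]. rewrite Hb in Ha.
      apply (f_equal Re) in Ha. unfold cexp in Ha. simpl in Ha. fold FZ in Ha. unfold Re. replace (fst FZ - p t) with (fst FZ + - p t) by ring. rewrite Ha. ring.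
    - auto_derive; auto. change (fun x0 => p x0) with p. ring.
    - auto_derive; auto. change (fun x0 => U x0) with U. change (fun x0 => V x0) with V. ring. }
  assert (E2 : - Derive q t0 = - (exp (- U t0) * sin (- V t0)) + (x - t0) * (exp (- U t0) * - Derive U t0 * sin (- V t0) + exp (- U t0) * cos (- V t0) * - Derive V t0)
    + y * (exp (- U t0) * - Derive U t0 * cos (- V t0) + exp (- U t0) * - sin (- V t0) * - Derive V t0)).
  { apply (deriv_eq (fun t => Im FZ - q t) (fun t => (x - t) * (exp (- U t) * sin (- V t)) + y * (exp (- U t) * cos (- V t))) t0).
    - eapply filter_imp; [| apply Hloc]. intros t [Ha Hb]. rewrite Hb in Ha.
      apply (f_equal Im) in Ha. unfold cexp in Ha. simpl in Ha. fold FZ in Ha. unfold Im. replace (snd FZ - q t) with (snd FZ + - q t) by ring. rewrite Ha. ring.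
    - auto_derive; auto. change (fun x0 => q x0) with q. ring.
    - auto_derive; auto. change (fun x0 => U x0) with U. change (fun x0 => V x0) with V. ring. }
  destruct (locally_singleton _ _ Hloc) as [K1 K2]. fold FZ in K1, K2 |- *.
  rewrite K1. 
  assert (Hzt : ((x, y) - RtoC t0)%C <> RtoC 0).
  { intros E. apply (f_equal Im) in E. simpl in E. lra. }
  replace (((x, y) - RtoC t0) * cexp (Copp (U t0, V t0)) / ((x, y) - RtoC t0))%C with (cexp (Copp (U t0, V t0))) by (field; auto).
  unfold cexp. simpl. apply injective_projections; simpl.
  - lra.
  - lra.
Qed.


Definition ee (a : nat -> C) (z : C) (n : nat) : C := CS (fun p => (a (p + n + 1)%nat * z ^ p)%C).

Lemma a_bound a f (hf : taylor_on_disc a f) R1 : 0 <= R1 < 1 -> exists M, forall m, Cmod (a m) * R1 ^ m <= M.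
Proof.
  intros H. assert (HR1 : Cmod (RtoC R1) < 1) by (rewrite Cmod_RtoC_pos; lra).
  destruct (Cseries_bounded _ _ (hf _ HR1)) as [M HM]. exists M. intros m.
  specialize (HM m). rewrite Cmod_term, Cmod_RtoC_pos in HM by lra. auto.
Qed.

Lemma tail_geom (a : nat -> C) M R1 s n : 0 < R1 -> 0 <= s -> (forall m, Cmod (a m) * R1 ^ m <= M) ->
  forall p, Cmod (a (p + n + 1)%nat) * s ^ p <= M / R1 ^ (n + 1) * (s / R1) ^ p.
Proof.
  intros HR Hs HM p. replace (p + n + 1)%nat with (p + (n + 1))%nat by lia.
  specialize (HM (p + (n + 1))%nat). rewrite pow_add in HM.
  pose proof (pow_lt R1 p HR). pose proof (pow_lt R1 (n + 1) HR).
  unfold Rdiv. rewrite Rpow_mult_distr, pow_inv.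
  replace (M * / R1 ^ (n + 1) * (s ^ p * / R1 ^ p)) with ((M / (R1 ^ p * R1 ^ (n + 1))) * s ^ p) by (field; split; lra).
  apply Rmult_le_compat_r. apply pow_le; auto.
  apply (Rmult_le_reg_r (R1 ^ p * R1 ^ (n + 1))). nra.
  replace (M / (R1 ^ p * R1 ^ (n + 1)) * (R1 ^ p * R1 ^ (n + 1))) with M by (field; repeat split; apply Rgt_not_eq; assumption). lra.
Qed.

Lemma ex_geom_scal K q : Rabs q < 1 -> ex_series (fun p => K * q ^ p).
Proof.
  intros H. exists (K * / (1 - q)).
  apply (is_series_scal_l (K:=R_AbsRing) (V:=R_NormedModule) K). apply is_series_geom; auto.
Qed.

Lemma ee_ok a f (hf : taylor_on_disc a f) z n : Cmod z < 1 ->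
  is_series (fun p => (a (p + n + 1)%nat * z ^ p)%C) (ee a z n).
Proof.
  intros Hz. apply CS_ex. apply ex_series_Cabs.
  set (R1 := (Cmod z + 1) / 2). pose proof (Cmod_ge_0 z).
  destruct (a_bound a f hf R1 ltac:(unfold R1; lra)) as [M HM].
  apply (Rex_series_le _ (fun p => M / R1 ^ (n + 1) * (Cmod z / R1) ^ p)).
  - intros p. split. apply Cmod_ge_0. rewrite Cmod_term. apply tail_geom; auto. unfold R1; lra.
  - apply ex_geom_scal. rewrite Rabs_pos_eq. apply (Rmult_lt_reg_r R1). unfold R1; lra.
    unfold Rdiv. rewrite Rmult_assoc, Rinv_l. unfold R1; lra. unfold R1; lra.
    apply Rmult_le_pos; auto. left; apply Rinv_0_lt_compat; unfold R1; lra.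
Qed.

Definition Fc (a : nat -> C) (f : C -> C) (z : C) (n : nat) : C :=
  match n with O => f z | S m => (- a (S m))%C end.

Lemma delta_series (X : C) : is_series (fun n => match n with O => X | S _ => RtoC 0 end) X.
Proof.
  assert (H : forall n, sum_n (fun n => match n with O => X | S _ => RtoC 0 end) n = X).
  { induction n. rewrite sum_O. auto. rewrite sum_n_C_S, IHn. apply Cplus_0_r. }
  rewrite Cseries_eps. intros eps Heps. exists 0%nat. intros n _. rewrite H.
  replace (X - X)%C with (RtoC 0) by ring. rewrite Cmod_0. auto.
Qed.

Lemma is_series_Cminus (a b : nat -> C) la lb : is_series a la -> is_series b lb ->
  is_series (fun n => (a n - b n)%C) (la - lb)%C.
Proof. intros H1 H2. exact (is_series_minus (K:=C_AbsRing) (V:=C_NormedModule) _ _ _ _ H1 H2). Qed.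
Lemma is_series_Cplus (a b : nat -> C) la lb : is_series a la -> is_series b lb ->
  is_series (fun n => (a n + b n)%C) (la + lb)%C.
Proof. intros H1 H2. exact (is_series_plus (K:=C_AbsRing) (V:=C_NormedModule) _ _ _ _ H1 H2). Qed.
Lemma is_series_Cscal_l (a : nat -> C) l (x : C) : is_series a l -> is_series (fun n => (x * a n)%C) (x * l)%C.
Proof. intros H. exact (is_series_scal_l (K:=C_AbsRing) (V:=C_NormedModule) x _ _ H). Qed.

Lemma Fc_series a f (ha0 : a 0%nat = RtoC 0) (hf : taylor_on_disc a f) z t : Cmod t < 1 ->
  is_series (fun n => (Fc a f z n * t ^ n)%C) (f z - f t)%C.
Proof.
  intros Ht. eapply is_series_ext; [| apply (is_series_Cminus _ _ _ _ (delta_series (f z)) (hf t Ht))].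
  intros [|m]; simpl. rewrite ha0. ring. ring.
Qed.

Lemma is_series_Cshift (a : nat -> C) (l : C) : is_series a l -> is_series (fun k => a (S k)) (l - a 0%nat)%C.
Proof.
  intros H. assert (E : l = plus (l - a 0%nat)%C (a 0%nat)) by (change plus with Cplus; simpl; ring).
  rewrite E in H. exact (is_series_incr_1 (K:=C_AbsRing) (V:=C_NormedModule) _ _ H).
Qed.

Lemma is_series_Cunshift (a : nat -> C) (l : C) : a 0%nat = RtoC 0 -> is_series (fun k => a (S k)) l -> is_series a l.
Proof.
  intros H0 H. assert (E : l = plus l (opp (a 0%nat))) by (rewrite H0; change plus with Cplus; change opp with Copp; simpl; ring).
  rewrite E in H. exact (is_series_decr_1 (K:=C_AbsRing) (V:=C_NormedModule) _ _ H).
Qed.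

Lemma ee_rel0 a f (ha0 : a 0%nat = RtoC 0) (hf : taylor_on_disc a f) z : Cmod z < 1 -> (z * ee a z 0 = f z)%C.
Proof.
  intros Hz. apply (Cseries_unique (fun p => (a (S p) * z ^ S p)%C)).
  - eapply is_series_ext; [| apply (is_series_Cscal_l _ _ z (ee_ok a f hf z 0 Hz))].
    intros p. cbv beta. replace (p + 0 + 1)%nat with (S p) by lia. simpl. ring.
  - replace (f z) with (f z - a 0%nat * z ^ 0)%C by (rewrite ha0; ring).
    apply (is_series_Cshift (fun p => (a p * z ^ p)%C)). apply hf; auto.
Qed.

Lemma ee_relS a f (hf : taylor_on_disc a f) z m : Cmod z < 1 -> (z * ee a z (S m) = ee a z m - a (S m))%C.
Proof.
  intros Hz. apply (Cseries_unique (fun p => (a (S p + m + 1)%nat * z ^ S p)%C)).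
  - eapply is_series_ext; [| apply (is_series_Cscal_l _ _ z (ee_ok a f hf z (S m) Hz))].
    intros p. cbv beta. replace (p + S m + 1)%nat with (S p + m + 1)%nat by lia. simpl. ring.
  - replace (a (S m)) with (a (0 + m + 1)%nat * z ^ 0)%C by (replace (0 + m + 1)%nat with (S m) by lia; simpl; ring).
    apply (is_series_Cshift (fun p => (a (p + m + 1)%nat * z ^ p)%C)). apply (ee_ok a f hf); auto.
Qed.

Lemma ee_bound a f (hf : taylor_on_disc a f) z M R1 n : Cmod z < R1 -> R1 < 1 -> (forall m, Cmod (a m) * R1 ^ m <= M) ->
  Cmod (ee a z n) <= M / R1 ^ (n + 1) * / (1 - Cmod z / R1).
Proof.
  intros HzR HR1 HM. pose proof (Cmod_ge_0 z).
  assert (HR : 0 < R1) by lra.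
  assert (Hq : Rabs (Cmod z / R1) < 1).
  { rewrite Rabs_pos_eq. apply (Rmult_lt_reg_r R1); auto. unfold Rdiv. rewrite Rmult_assoc, Rinv_l; lra.
    apply Rmult_le_pos; auto. left; apply Rinv_0_lt_compat; auto. }
  pose proof (Cseries_norm_le _ _ (fun p => M / R1 ^ (n + 1) * (Cmod z / R1) ^ p) (ee_ok a f hf z n ltac:(lra))) as Hb.
  rewrite Series_scal_l, Series_geom in Hb by auto. apply Hb.
  - intros p. rewrite Cmod_term. apply tail_geom; auto.
  - apply ex_geom_scal; auto.
Qed.

Lemma ee_series a f (ha0 : a 0%nat = RtoC 0) (hf : taylor_on_disc a f) z t :
  Cmod z < 1 -> Cmod t < 1 -> z <> t ->
  is_series (fun n => (ee a z n * t ^ n)%C) ((f z - f t) / (z - t))%C.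
Proof.
  intros Hz Ht Hzt.
  pose proof (Cmod_ge_0 z). pose proof (Cmod_ge_0 t).
  set (R1 := (Rmax (Cmod z) (Cmod t) + 1) / 2).
  assert (HR1 : Cmod z < R1 /\ Cmod t < R1 /\ R1 < 1).
  { unfold R1. pose proof (Rmax_l (Cmod z) (Cmod t)). pose proof (Rmax_r (Cmod z) (Cmod t)).
    assert (Rmax (Cmod z) (Cmod t) < 1) by (apply Rmax_lub_lt; auto). lra. }
  destruct HR1 as [HzR [HtR HR1]].
  destruct (a_bound a f hf R1 ltac:(lra)) as [M HM].
  assert (HR : 0 < R1) by lra.
  assert (Hex : ex_series (fun n => (ee a z n * t ^ n)%C)).
  { apply ex_series_Cabs.
    apply (Rex_series_le _ (fun n => (M / R1 / (1 - Cmod z / R1)) * (Cmod t / R1) ^ n)).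
    - intros n. split. apply Cmod_ge_0. rewrite Cmod_term.
      pose proof (ee_bound a f hf z M R1 n HzR HR1 HM) as Hb.
      pose proof (pow_le (Cmod t) n H0).
      eapply Rle_trans. apply Rmult_le_compat_r. auto. exact Hb.
      right. unfold Rdiv. rewrite Rpow_mult_distr, pow_inv, pow_add. simpl. field.
      assert (0 < 1 - Cmod z * / R1).
      { apply (Rmult_lt_reg_r R1); auto. rewrite Rmult_minus_distr_r, Rmult_assoc, Rinv_l; lra. }
      pose proof (pow_lt R1 n HR). repeat split; lra.
    - apply ex_geom_scal. rewrite Rabs_pos_eq. apply (Rmult_lt_reg_r R1); auto. unfold Rdiv. rewrite Rmult_assoc, Rinv_l; lra.
      apply Rmult_le_pos; auto. left; apply Rinv_0_lt_compat; auto. }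
  destruct Hex as [l Hl]. change C in l.
  assert (Hzl : (z * l - t * l = f z - f t)%C).
  { apply (Cseries_unique (fun n => (Fc a f z n * t ^ n)%C)).
    2: apply Fc_series; auto.
    set (g := fun n => match n with O => RtoC 0 | S m => (ee a z m * t ^ S m)%C end).
    assert (Hg : is_series g (t * l)%C).
    { apply is_series_Cunshift. reflexivity.
      eapply is_series_ext; [| apply (is_series_Cscal_l _ _ t Hl)]. intros n. simpl. ring. }
    eapply is_series_ext; [| apply (is_series_Cminus _ _ _ _ (is_series_Cscal_l _ _ z Hl) Hg)].
    intros [|m]; simpl.
    - rewrite <- (ee_rel0 a f ha0 hf z Hz). ring.
    - replace (z * (ee a z (S m) * (t * t ^ m)) - ee a z m * (t * t ^ m))%C
        with ((z * ee a z (S m) - ee a z m) * (t * t ^ m))%C by ring.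
      rewrite (ee_relS a f hf z m Hz). ring. }
  replace ((f z - f t) / (z - t))%C with l. auto.
  rewrite <- Hzl. field. intros E. apply Hzt. apply (f_equal (fun x => x + t)%C) in E. ring_simplify in E. auto.
Qed.


Definition bd (c : nat -> nat -> C) (z : C) (n : nat) : C := (RtoC (INR (S n)) * bb c z (S n))%C.
Definition fd (a : nat -> C) (n : nat) : C := (RtoC (INR (S n)) * a (S n))%C.
Definition DD a f c z n : C :=
  (sum_n (fun k => bd c z k * Fc a f z (n - k)%nat) n - fd a n + ee a z n)%C.

Lemma sum_n_Cmult_r (u : nat -> C) (x : C) n : (sum_n u n * x)%C = sum_n (fun k => u k * x)%C n.
Proof. induction n. rewrite !sum_O. auto. rewrite !sum_n_C_S, <- IHn. ring. Qed.

Lemma Cpow_add (z : C) m p : (z ^ (m + p) = z ^ m * z ^ p)%C.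
Proof. induction m; simpl. ring. rewrite IHm. ring. Qed.

Lemma Fc_abs a f (hf : taylor_on_disc a f) z (t : C) : Cmod t < 1 ->
  ex_series (fun n => Cmod (Fc a f z n * t ^ n)%C).
Proof.
  intros Ht. apply ex_series_incr_1.
  pose proof (a_abs a f hf (Cmod t) (conj (Cmod_ge_0 t) Ht)) as H.
  apply ex_series_incr_1 in H.
  eapply ex_series_ext; [| exact H]. intros n. cbv beta. unfold Fc. rewrite Cmod_mult, Cmod_opp, Cmod_pow. reflexivity.
Qed.

Lemma DD_series a f c eps z (t : R) : 0 < eps -> HGR f c eps -> taylor_on_disc a f -> a 0%nat = RtoC 0 ->
  Im z <> 0 -> Cmod z < Rmin eps 1 -> Rabs t < Rmin eps 1 ->
  is_series (fun n => (DD a f c z n * RtoC t ^ n)%C) (RtoC 0).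
Proof.
  intros He H hf ha0 Hi Hz Ht.
  assert (Hr1 : Rmin eps 1 <= eps) by apply Rmin_l.
  assert (Hr2 : Rmin eps 1 <= 1) by apply Rmin_r.
  assert (Ht1 : Cmod (RtoC t) < 1) by (rewrite Cmod_R; lra).
  assert (Hz1 : Cmod z < 1) by lra.
  assert (Hze : Cmod z < eps) by lra.
  pose proof (Fc_series a f ha0 hf z (RtoC t) Ht1) as FS.
  pose proof (pseries_C_derive (bb c z) t (rad_bb_Re f c eps z He H Hi Hze t ltac:(lra)) (rad_bb_Im f c eps z He H Hi Hze t ltac:(lra))) as BS.
  pose proof (pseries_C_derive_abs (bb c z) t (rad_bb_Re f c eps z He H Hi Hze t ltac:(lra)) (rad_bb_Im f c eps z He H Hi Hze t ltac:(lra))) as BA.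
  pose proof (pseries_C_derive a t (rad_a_Re a f hf t ltac:(lra)) (rad_a_Im a f hf t ltac:(lra))) as AS.
  pose proof (ee_series a f ha0 hf z (RtoC t) Hz1 Ht1 (RtoC_neq_nonreal z t Hi)) as ES.
  pose proof (cauchy_C _ _ _ _ BS FS BA (Fc_abs a f hf z (RtoC t) Ht1)) as CS1.
  pose proof (is_series_Cplus _ _ _ _ (is_series_Cminus _ _ _ _ CS1 AS) ES) as T.
  pose proof (deriv_identity a f c eps z t He H hf Hi Hze Ht) as DI.
  fold (uu c z) (vv c z) in DI.
  match goal with T : is_series _ ?l |- _ => replace (RtoC 0) with l end.
  2:{ change (Derive (fun t => PSeries (fun n : nat => Re (bb c z n)) t) t) with (Derive (uu c z) t).
      change (Derive (fun t => PSeries (fun n : nat => Im (bb c z n)) t) t) with (Derive (vv c z) t).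
      unfold uu, vv in DI.
      assert (DI' : ((f z - f t) *
        (Derive (PSeries (fun n : nat => Re (bb c z n))) t, Derive (PSeries (fun n : nat => Im (bb c z n))) t))%C =
        ((Derive (PSeries (fun n : nat => Re (a n))) t, Derive (PSeries (fun n : nat => Im (a n))) t) - (f z - f t) / (z - t))%C) by exact DI.
      rewrite (Cmult_comm _ (f z - f t)%C), DI'. ring. }
  eapply is_series_ext; [| exact T]. intros n. cbv beta. unfold DD.
  assert (Hs : sum_n (fun k => (RtoC (INR (S k)) * bb c z (S k) * RtoC t ^ k * (Fc a f z (n - k) * RtoC t ^ (n - k))))%C n
     = (sum_n (fun k => bd c z k * Fc a f z (n - k)%nat) n * RtoC t ^ n)%C).
  { rewrite sum_n_Cmult_r. apply sum_n_ext_loc. intros k Hk. unfold bd.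
    replace (RtoC t ^ n)%C with (RtoC t ^ k * RtoC t ^ (n - k))%C by (rewrite <- Cpow_add; f_equal; lia). match goal with |- ?x = ?y => change (@eq C x y) end. ring. }
  rewrite Hs. unfold fd. match goal with |- ?x = ?y => change (@eq C x y) end. ring.
Qed.

Lemma stage1 a f c eps z : 0 < eps -> HGR f c eps -> taylor_on_disc a f -> a 0%nat = RtoC 0 ->
  Im z <> 0 -> Cmod z < Rmin eps 1 -> forall n, DD a f c z n = RtoC 0.
Proof.
  intros He H hf ha0 Hi Hz.
  assert (Hrho : 0 < Rmin eps 1) by (apply Rmin_pos; lra).
  set (R0 := Rmin eps 1 / 2).
  apply (ps_zero _ R0 (fun x => Im x = 0)).
  - unfold R0; lra.
  - destruct (Cseries_bounded _ _ (DD_series a f c eps z R0 He H hf ha0 Hi Hz ltac:(rewrite Rabs_pos_eq; unfold R0; lra))) as [M HM].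
    exists M. intros n. specialize (HM n). rewrite Cmod_term, Cmod_RtoC_pos in HM by (unfold R0; lra). auto.
  - intros [xr xi] Hxi Hx0 HxR. simpl in Hxi. subst xi.
    change (xr, 0) with (RtoC xr) in *. rewrite Cmod_R in HxR.
    apply (DD_series a f c eps z xr He H hf ha0 Hi Hz). unfold R0 in HxR; lra.
  - intros d Hd. exists (RtoC (Rmin d 1 / 2)). assert (0 < Rmin d 1) by (apply Rmin_pos; lra).
    assert (Rmin d 1 <= d) by apply Rmin_l.
    repeat split.
    + intros E. injection E. lra.
    + rewrite Cmod_RtoC_pos; lra.
Qed.


Ltac Cring := match goal with |- ?x = ?y => change (@eq C x y) end; ring.

Definition dlt (X : C) (m : nat) : C := match m with O => X | S _ => RtoC 0 end.
Definition phi (a : nat -> C) (k m : nat) : C := match k with O => a m | S k' => dlt (- a (S k'))%C m end.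
Definition beta (c : nat -> nat -> C) (j m : nat) : C := (RtoC (INR (S j)) * c m (S j))%C.
Definition GG (a : nat -> C) (c : nat -> nat -> C) (n m : nat) : C :=
  (sum_n (fun k => sum_n (fun i => phi a (n - k)%nat i * beta c k (m - i)%nat) m) n
    - dlt (fd a n) m + a (m + n + 1)%nat)%C.

Lemma dlt_series (X z : C) : is_series (fun m => (dlt X m * z ^ m)%C) X.
Proof.
  eapply is_series_ext; [| apply delta_series]. intros [|m]; simpl; ring.
Qed.

Lemma ex_series_R0 : ex_series (fun _ : nat => 0).
Proof.
  eapply ex_series_ext; [| apply (ex_geom_scal 0 0)]. intros; simpl; ring.
  rewrite Rabs_R0; lra.
Qed.

Lemma dlt_abs (X z : C) : ex_series (fun m => Cmod (dlt X m * z ^ m)%C).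
Proof.
  apply ex_series_incr_1. eapply ex_series_ext; [| apply ex_series_R0].
  intros m. simpl. rewrite Cmult_0_l, Cmod_0. reflexivity.
Qed.

Lemma phi_series a f (hf : taylor_on_disc a f) z k : Cmod z < 1 ->
  is_series (fun m => (phi a k m * z ^ m)%C) (Fc a f z k).
Proof.
  intros Hz. destruct k as [|k]; simpl.
  - apply hf; auto.
  - apply dlt_series.
Qed.

Lemma phi_abs a f (hf : taylor_on_disc a f) z k : Cmod z < 1 ->
  ex_series (fun m => Cmod (phi a k m * z ^ m)%C).
Proof.
  intros Hz. destruct k as [|k]; simpl.
  - eapply ex_series_ext; [| apply (a_abs a f hf (Cmod z) (conj (Cmod_ge_0 z) Hz))].
    intros m. rewrite Cmod_term. reflexivity.
  - apply dlt_abs.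
Qed.

Lemma beta_series f c eps z j : 0 < eps -> HGR f c eps -> Cmod z < eps ->
  is_series (fun m => (beta c j m * z ^ m)%C) (bd c z j).
Proof.
  intros He H Hz. eapply is_series_ext; [| apply (is_series_Cscal_l _ _ (RtoC (INR (S j))) (bb_ok f c eps z He H Hz (S j)))].
  intros m. unfold beta. simpl. Cring.
Qed.

Lemma beta_abs f c eps z j : 0 < eps -> HGR f c eps -> Cmod z < eps ->
  ex_series (fun m => Cmod (beta c j m * z ^ m)%C).
Proof.
  intros He H Hz. eapply ex_series_ext; [| apply (ex_series_scal_l (K:=R_AbsRing) (V:=R_NormedModule) (Cmod (RtoC (INR (S j))))), (col_abs' f c eps z He H Hz (S j))].
  intros m. unfold beta. rewrite !Cmod_mult, Cmod_pow. change (scal (Cmod (RtoC (INR (S j)))) (Cmod (c m (S j)) * Cmod z ^ m)) with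
    (Cmod (RtoC (INR (S j))) * (Cmod (c m (S j)) * Cmod z ^ m)). match goal with |- ?x = ?y => change (@eq R x y) end; ring.
Qed.

Lemma GG_series a f c eps z n : 0 < eps -> HGR f c eps -> taylor_on_disc a f ->
  Cmod z < Rmin eps 1 -> is_series (fun m => (GG a c n m * z ^ m)%C) (DD a f c z n).
Proof.
  intros He H hf Hz.
  assert (Hz1 : Cmod z < 1) by (pose proof (Rmin_r eps 1); lra).
  assert (Hze : Cmod z < eps) by (pose proof (Rmin_l eps 1); lra).
  set (A := fun m k => sum_n (fun i => (phi a (n - k)%nat i * z ^ i * (beta c k (m - i)%nat * z ^ (m - i))))%C m).
  assert (HA : forall k, is_series (fun m => A m k) (Fc a f z (n - k)%nat * bd c z k)%C).
  { intros k. unfold A. apply (cauchy_C (fun i => (phi a (n - k)%nat i * z ^ i)%C) (fun i => (beta c k i * z ^ i)%C)).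
    apply phi_series; auto. apply (beta_series f c eps); auto.
    apply (phi_abs a f hf); auto. apply (beta_abs f c eps); auto. }
  pose proof (is_series_sum_n A (fun k => (Fc a f z (n - k)%nat * bd c z k)%C) n HA) as HS.
  pose proof (is_series_Cplus _ _ _ _ (is_series_Cminus _ _ _ _ HS (dlt_series (fd a n) z)) (ee_ok a f hf z n Hz1)) as T.
  replace (DD a f c z n) with (sum_n (fun k => Fc a f z (n - k)%nat * bd c z k) n - fd a n + ee a z n)%C.
  2:{ unfold DD. assert (E : sum_n (fun k => Fc a f z (n - k)%nat * bd c z k)%C n = sum_n (fun k => bd c z k * Fc a f z (n - k)%nat)%C n).
       { apply sum_n_ext. intros k. apply Cmult_comm. }
       rewrite E. reflexivity. }
  eapply is_series_ext; [| exact T]. intros m. cbv beta. unfold GG.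
  assert (Hs : sum_n (fun k => A m k) n = (sum_n (fun k => sum_n (fun i => phi a (n - k)%nat i * beta c k (m - i)%nat) m) n * z ^ m)%C).
  { rewrite sum_n_Cmult_r. apply sum_n_ext. intros k. unfold A. rewrite sum_n_Cmult_r.
    apply sum_n_ext_loc. intros i Hi.
    replace (z ^ m)%C with (z ^ i * z ^ (m - i))%C by (rewrite <- Cpow_add; f_equal; lia).
    change (@eq C (phi a (n - k) i * z ^ i * (beta c k (m - i) * z ^ (m - i)))%C (phi a (n - k) i * beta c k (m - i) * (z ^ i * z ^ (m - i)))%C). ring. }
  rewrite Hs. change (@eq C (sum_n (fun k => sum_n (fun i => phi a (n - k)%nat i * beta c k (m - i)%nat) m) n * z ^ m - dlt (fd a n) m * z ^ m + a (m + n + 1)%nat * z ^ m)%C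
   ((sum_n (fun k => sum_n (fun i => phi a (n - k)%nat i * beta c k (m - i)%nat) m) n - dlt (fd a n) m + a (m + n + 1)%nat) * z ^ m)%C).
  ring.
Qed.

Lemma stage2 a f c eps : 0 < eps -> HGR f c eps -> taylor_on_disc a f -> a 0%nat = RtoC 0 ->
  forall n m, GG a c n m = RtoC 0.
Proof.
  intros He H hf ha0 n.
  assert (Hrho : 0 < Rmin eps 1) by (apply Rmin_pos; lra).
  set (R0 := Rmin eps 1 / 2).
  apply (ps_zero _ R0 (fun x => Re x = 0)).
  - unfold R0; lra.
  - assert (HR0 : Cmod (RtoC R0) < Rmin eps 1) by (rewrite Cmod_RtoC_pos; unfold R0; lra).
    destruct (Cseries_bounded _ _ (GG_series a f c eps (RtoC R0) n He H hf HR0)) as [M HM].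
    exists M. intros m. specialize (HM m). rewrite Cmod_term, Cmod_RtoC_pos in HM by (unfold R0; lra). auto.
  - intros [xr xi] Hxr Hx0 HxR. simpl in Hxr. subst xr.
    assert (Hxi : xi <> 0) by (intros E; subst; apply Hx0; reflexivity).
    assert (Hx : Cmod (0, xi) < Rmin eps 1) by (unfold R0 in HxR; lra).
    rewrite <- (stage1 a f c eps (0, xi) He H hf ha0 Hxi Hx n).
    apply (GG_series a f c eps (0, xi) n He H hf Hx).
  - intros d Hd. assert (0 < Rmin d 1) by (apply Rmin_pos; lra).
    assert (Rmin d 1 <= d) by apply Rmin_l.
    exists (0, Rmin d 1 / 2). repeat split.
    + intros E. injection E. lra.
    + unfold Cmod. simpl. replace (0 * (0 * 1) + Rmin d 1 / 2 * (Rmin d 1 / 2 * 1)) with ((Rmin d 1 / 2) ^ 2) by ring.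
      rewrite sqrt_pow2 by lra. lra.
Qed.


Ltac Cring2 := match goal with |- ?x = ?y => change (@eq C x y) end; ring.

Lemma La (g : nat -> C) m : sum_n g m = (g 0%nat + sum_n_m g 1 m)%C.
Proof.
  unfold sum_n. rewrite (sum_n_m_Chasles g 0 0 m) by lia. rewrite sum_n_n. reflexivity.
Qed.

Lemma Lb (g : nat -> C) n : sum_n g n = (g n + sum_n_m (fun l => g (pred l)) 1 n)%C.
Proof.
  induction n.
  - rewrite sum_O, sum_n_m_zero by lia. change (zero : C) with (RtoC 0). Cring2.
  - rewrite sum_n_C_S, IHn. rewrite sum_n_Sm by lia. simpl pred.
    change (plus (sum_n_m (fun l => g (pred l)) 1 n) (g n)) with (sum_n_m (fun l => g (pred l)) 1 n + g n)%C.
    Cring2.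
Qed.

Lemma Lc (X : C) (Y : nat -> C) m : sum_n (fun i => dlt X i * Y i)%C m = (X * Y 0%nat)%C.
Proof.
  induction m. rewrite sum_O. reflexivity.
  rewrite sum_n_C_S, IHm. simpl. Cring2.
Qed.

Lemma Ld (u : nat -> C) (x : C) p q : sum_n_m (fun l => u l * x)%C p q = (sum_n_m u p q * x)%C.
Proof. exact (sum_n_m_mult_r (K:=C_Ring) x u p q). Qed.

Lemma Lshift (g : nat -> C) m : sum_n g (S m) = (g 0%nat + sum_n (fun i => g (S i)) m)%C.
Proof.
  rewrite La. unfold sum_n. rewrite <- sum_n_m_S. reflexivity.
Qed.

Lemma final_alg (a : nat -> C) (c : nat -> nat -> C) (ha0 : a 0%nat = RtoC 0) (ha1 : a 1%nat = RtoC 1)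
  j k : (1 <= k)%nat -> GG a c (k - 1) (S j) = RtoC 0 ->
    c j k =
      (sum_n_m (fun l => RtoC (INR l / INR k) * a (k - l)%nat * c (S j) l) 1 (k - 1)
       - sum_n_m (fun m => a (S m) * c (j - m)%nat k) 1 j
       - a (S (j + k)) / RtoC (INR k))%C.
Proof.
  intros Hk HG. destruct k as [|n]. lia.
  assert (HKR : INR (S n) <> 0) by (rewrite S_INR; pose proof (pos_INR n); lra).
  assert (HK : RtoC (INR (S n)) <> RtoC 0) by (intros E; injection E; auto).
  replace (S n - 1)%nat with n in * by lia.
  unfold GG in HG. rewrite Lb in HG.
  pose (g := fun k => sum_n (fun i => phi a (n - k)%nat i * beta c k (S j - i)%nat)%C (S j)).
  assert (E1 : sum_n_m (fun l => g (pred l)) 1 n = sum_n_m (fun l => (- a (S n - l)%nat) * (RtoC (INR l) * c (S j) l))%C 1 n).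
  { apply sum_n_m_ext_loc. intros l Hl. unfold g.
    replace (n - pred l)%nat with (S (n - l)) by lia. simpl phi. rewrite Lc.
    unfold beta. replace (S (pred l)) with l by lia. replace (S j - 0)%nat with (S j) by lia.
    replace (S (n - l)) with (S n - l)%nat by lia. reflexivity. }
  assert (E2 : g n = (RtoC (INR (S n)) * c j (S n) + sum_n_m (fun mm => a (S mm) * (RtoC (INR (S n)) * c (j - mm)%nat (S n))) 1 j)%C).
  { unfold g. replace (n - n)%nat with 0%nat by lia. simpl phi.
    rewrite Lshift, La. rewrite ha0, ha1. unfold beta.
    replace (S j - S 0)%nat with j by lia.
    assert (E : sum_n_m (fun i => a (S i) * (RtoC (INR (S n)) * c (S j - S i)%nat (S n)))%C 1 j =
                sum_n_m (fun mm => a (S mm) * (RtoC (INR (S n)) * c (j - mm)%nat (S n)))%C 1 j).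
    { apply sum_n_m_ext_loc. intros i Hi. replace (S j - S i)%nat with (j - i)%nat by lia. reflexivity. }
    rewrite E. Cring2. }
  unfold g in E1, E2. cbv beta in E1, E2. rewrite E1, E2 in HG. simpl dlt in HG.
  replace (S j + n + 1)%nat with (S (j + S n)) in HG by lia.
  rewrite (sum_n_m_ext_loc (fun l => RtoC (INR l / INR (S n)) * a (S n - l)%nat * c (S j) l)%C
                           (fun l => (- a (S n - l)%nat) * (RtoC (INR l) * c (S j) l) * (- / RtoC (INR (S n))))%C).
  2:{ intros l Hl. rewrite RtoC_div by auto. match goal with |- ?x = ?y => change (@eq C x y) end. field. auto. }
  rewrite (sum_n_m_ext_loc (fun m => a (S m) * c (j - m)%nat (S n))%C
                           (fun mm => a (S mm) * (RtoC (INR (S n)) * c (j - mm)%nat (S n)) * / RtoC (INR (S n)))%C).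
  2:{ intros l Hl. match goal with |- ?x = ?y => change (@eq C x y) end. field. auto. }
  rewrite !Ld.
  match goal with H : ?x = ?y |- _ => change (@eq C x y) in H end.
  match goal with |- ?x = ?y => change (@eq C x y) end.
  set (S1 := sum_n_m (fun l => (- a (S n - l)%nat) * (RtoC (INR l) * c (S j) l))%C 1 n) in *.
  set (S2 := sum_n_m (fun mm => a (S mm) * (RtoC (INR (S n)) * c (j - mm)%nat (S n)))%C 1 j) in *.
  assert (E : (RtoC (INR (S n)) * c j (S n) = - S1 - S2 - a (S (j + S n)))%C).
  { rewrite <- (Cplus_0_l (- S1 - S2 - a (S (j + S n)))%C). rewrite <- HG. ring. }
  replace (c j (S n)) with ((RtoC (INR (S n)) * c j (S n)) / RtoC (INR (S n)))%C by (field; auto).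
  rewrite E. field. auto.
Qed.


Theorem lemma3p4 (a : nat -> C) (f : C -> C) (c : nat -> nat -> C)
  (ha0 : a 0%nat = RtoC 0) (ha1 : a 1%nat = RtoC 1)
  (hf : taylor_on_disc a f) (hc : grunsky_coeffs f c) :
  forall j k : nat, (1 <= k)%nat ->
    c j k =
      (sum_n_m (fun l => RtoC (INR l / INR k) * a (k - l)%nat * c (S j) l) 1 (k - 1)
       - sum_n_m (fun m => a (S m) * c (j - m)%nat k) 1 j
       - a (S (j + k)) / RtoC (INR k))%C.
Proof.
  intros j k Hk. destruct hc as [_ [eps [He Hrest]]].
  apply final_alg; auto.
  apply (stage2 a f c eps); auto.
Qed.
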